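(* Let $n\ge 1$ and let $F:\mathbb{F}_{2^n}\to\mathbb{F}_{2^n}$ be any function, identified with its associated polynomial $F(X)$ over $\mathbb{F}_{2^n}$. Then $$\sum_{b\in \mathbb{F}_{2^n}^*}\ \sum_{v_1,v_2\in \mathbb{F}_{2^n}}W_F(bv_1,v_1)\,W_F(bv_2,v_2)\,W_F(b(v_1+v_2),v_1+v_2)\;+\;2^{n+2}\sum_{v\in \mathbb{F}_{2^n}^*}W_F^2(0,v)\;-\;2^{4n+2}\;+\;2^{3n+2}\;\ge\; 0,$$ and equality holds if and only if $F$ is an o-polynomial.
   Context: For a positive integer $n$, $tr_n:\mathbb{F}_{2^n}\to\mathbb{F}_2$ denotes the absolute trace $tr_n(x)=x+x^2+x^{2^2}+\cdots+x^{2^{n-1}}$, and $\mathbb{F}_{2^n}^*=\mathbb{F}_{2^n}\setminus\{0\}$. For $F:\mathbb{F}_{2^n}\to\mathbb{F}_{2^n}$ and $(u,v)\in\mathbb{F}_{2^n}^2$, the Walsh transform is $W_F(u,v)=\sum_{x\in\mathbb{F}_{2^n}}(-1)^{tr_n(vF(x))+tr_n(ux)}$ (an integer). In the projective plane $PG(2,2^n)$ (points = 1-dimensional subspaces of $\mathbb{F}_{2^n}^3$, lines = 2-dimensional subspaces, incidence = inclusion), a hyperoval is a set of $2^n+2$ points no three of which lie on a common line. A function (polynomial) $F$ over $\mathbb{F}_{2^n}$ is an o-polynomial if the set $\{(1,t,F(t)) : t\in\mathbb{F}_{2^n}\}\cup\{(0,1,0),(0,0,1)\}$ is a hyperoval of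 $PG(2,2^n)$. Equivalently (known fact), $F$ is an o-polynomial if and only if for every $a\in\mathbb{F}_{2^n}$ and every $b\in\mathbb{F}_{2^n}^*$ the equation $F(x)+bx=a$ has either $0$ or $2$ solutions $x\in\mathbb{F}_{2^n}$; in that case $F$ is a permutation of $\mathbb{F}_{2^n}$. *)

(* Defs.v *)
From HB Require Import structures.
From mathcomp Require Import all_boot all_order all_algebra all_fingroup all_field.
Set Implicit Arguments. Unset Strict Implicit. Unset Printing Implicit Defensive.
Import Order.TTheory GRing.Theory Num.Theory.
Local Open Scope ring_scope.

Section Defs.
Variable K : finFieldType.

Definition abs_trace (n : nat) (x : K) : K := \sum_(i < n) x ^+ (2 ^ i).

(* (-1)^t for t in F_2 (embedded in K as 0 or 1) *)
Definition sign2 (t : K) : int := if t == 0 then 1 else -1.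

Definition walsh (n : nat) (F : K -> K) (u v : K) : int :=
  \sum_(x : K) sign2 (abs_trace n (v * F x) + abs_trace n (u * x)).

(* Projective plane PG(2,K): a point is the row space of a nonzero vector of
   K^3, a line is a 2-dimensional subspace (row space of a rank-2 matrix),
   incidence is inclusion. *)
Definition row3 (a b c : K) : 'rV[K]_3 :=
  \row_(i < 3) (if (i : nat) == 0%N then a else if (i : nat) == 1%N then b else c).

Definition pg_collinear (p q r : 'rV[K]_3) : Prop :=
  exists L : 'M[K]_3, [/\ \rank L = 2%N, (p <= L)%MS, (q <= L)%MS & (r <= L)%MS].

Definition opoints (F : K -> K) : seq 'rV[K]_3 :=
  [seq row3 1 t (F t) | t <- enum K] ++ [:: row3 0 1 0; row3 0 0 1].

Definition o_polynomial (F : K -> K) : Prop :=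
  forall p q r, p \in opoints F -> q \in opoints F -> r \in opoints F ->
    ~~ (p == q)%MS -> ~~ (p == r)%MS -> ~~ (q == r)%MS ->
    ~ pg_collinear p q r.

End Defs.

(* Main.v *)
Require Import Defs.
From HB Require Import structures.
From mathcomp Require Import all_boot all_order all_algebra all_fingroup all_field.
From mathcomp Require Import zify ring.
Import Order.TTheory GRing.Theory Num.Theory.
Local Open Scope ring_scope.
Set Implicit Arguments. Unset Strict Implicit. Unset Printing Implicit Defensive.

Definition f3 (k : nat) : int := (k%:R)^+3 - 3%:R * (k%:R)^+2 + 2%:R * k%:R.
Definition f2 (k : nat) : int := (k%:R)^+2 - k%:R.
Lemma f3_ge0 k : 0 <= f3 k.
Proof. rewrite /f3; case: k => [|[|[|k]]] //. have : (0 <= k%:R :> int) by []. rewrite -[k.+3]addn3 natrD. set x := (k%:R : int). move=> h. nia. Qed.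
Lemma f3_eq0 k : (f3 k == 0) = (k <= 2)%N.
Proof. rewrite /f3; case: k => [|[|[|k]]] //. have -> : (k.+3 <= 2)%N = false by []. have : (0 <= k%:R :> int) by []. rewrite -[k.+3]addn3 natrD. set x := (k%:R : int). move=> h. apply/eqP => e; nia. Qed.
Lemma f2_ge0 k : 0 <= f2 k.
Proof. rewrite /f2; case: k => [|k] //. have : (0 <= k%:R :> int) by []. rewrite -[k.+1]addn1 natrD. set x := (k%:R : int). move=> h. nia. Qed.
Lemma f2_eq0 k : (f2 k == 0) = (k <= 1)%N.
Proof. rewrite /f2; case: k => [|[|k]] //. have -> : (k.+2 <= 1)%N = false by []. have : (0 <= k%:R :> int) by []. rewrite -[k.+2]addn2 natrD. set x := (k%:R : int). move=> h. apply/eqP => e; nia. Qed.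

Lemma det3 (R : comNzRingType) (f : nat -> nat -> R) : \det (\matrix_(i < 3, j < 3) f i j) =
  f 0 0 * (f 1 1 * f 2 2 - f 1 2 * f 2 1) - f 0 1 * (f 1 0 * f 2 2 - f 1 2 * f 2 0)
  + f 0 2 * (f 1 0 * f 2 1 - f 1 1 * f 2 0).
Proof.
rewrite (expand_det_row _ 0) !big_ord_recr big_ord0 /= add0r /cofactor.
rewrite !(expand_det_row _ 0) !big_ord_recr !big_ord0 /= !add0r /cofactor.
rewrite !det_mx11 !mxE /=.
rewrite !expr0 !expr1 /=. ring.
Qed.

Section Tr.
Variables (K : finFieldType) (n : nat).
Hypotheses (hn : (1 <= n)%N) (hK : #|K| = (2 ^ n)%N) (hchar : 2%N \in [pchar K]).

Lemma nat2 i : [pchar K].-nat (2 ^ i)%N.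
Proof. by rewrite pnatX (pnatE _ (pcharf_prime hchar)) hchar. Qed.

Lemma trD (x y : K) : abs_trace n (x + y) = abs_trace n x + abs_trace n y.
Proof. by rewrite /abs_trace -big_split; apply: eq_bigr => i _; rewrite exprDn_pchar ?nat2. Qed.

Lemma tr0 : abs_trace n (0:K) = 0.
Proof. by rewrite /abs_trace big1 // => i _; rewrite expr0n expn_eq0. Qed.

Lemma sqD (x y : K) : (x + y) ^+ 2 = x ^+ 2 + y ^+ 2.
Proof. by have := exprDn_pchar x y (nat2 1); rewrite expn1. Qed.

Lemma sum_sq (m : nat) (f : 'I_m -> K) : (\sum_(i < m) f i) ^+ 2 = \sum_(i < m) f i ^+ 2.
Proof.
elim: m f => [|m IH] f; first by rewrite !big_ord0 expr0n.
by rewrite !big_ord_recr /= sqD IH.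
Qed.

Lemma tr_sq (x : K) : abs_trace n x ^+ 2 = abs_trace n x.
Proof.
rewrite /abs_trace sum_sq.
case: n hn hK => // m _ hK'.
rewrite big_ord_recr big_ord_recl /= expn0 expr1.
rewrite -exprM -expnSr -hK' expf_card addrC; congr (_ + _).
by apply: eq_bigr => i _; rewrite -exprM -expnSr.
Qed.

Lemma tr01 (x : K) : abs_trace n x = 0 \/ abs_trace n x = 1.
Proof.
have := tr_sq x; set t := abs_trace n x => h.
have : t * (t - 1) = 0 by rewrite mulrBr mulr1 -expr2 h subrr.
by move/eqP; rewrite mulf_eq0 subr_eq0 => /orP[] /eqP; [left|right].
Qed.

Definition chi (x : K) : int := sign2 (abs_trace n x).

Lemma chi0 : chi 0 = 1.
Proof. by rewrite /chi tr0 /sign2 eqxx. Qed.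

Lemma sign2D (a b : K) : (a == 0) || (a == 1) -> (b == 0) || (b == 1) ->
  sign2 (a + b) = sign2 a * sign2 b.
Proof.
rewrite /sign2.
have h1 : (1 : K) != 0 := oner_neq0 _.
have h11 : (1 : K) + 1 = 0 by rewrite addrr_pchar2.
by case/orP=> /eqP-> /orP[] /eqP->; rewrite ?addr0 ?add0r ?h11 ?eqxx ?(negbTE h1).
Qed.

Lemma chiD (x y : K) : chi (x + y) = chi x * chi y.
Proof.
rewrite /chi trD sign2D //.
  by case: (tr01 x) => ->; rewrite eqxx ?orbT.
by case: (tr01 y) => ->; rewrite eqxx ?orbT.
Qed.

Lemma tr_nonzero : exists w : K, abs_trace n w != 0.
Proof.
apply/existsP; rewrite -negb_forall; apply/negP => /forallP H.
pose P : {poly K} := \sum_(i < n) 'X^(2 ^ i).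
have Pw w : P.[w] = abs_trace n w.
  by rewrite /P horner_sum; apply: eq_bigr => i _; rewrite hornerXn.
have P1 : P`_1 = 1.
  rewrite /P coef_sum; case: n hn => // m _.
  rewrite big_ord_recl /= coefXn expn0 eqxx big1 ?addr0 // => i _.
  by rewrite coefXn /= expnS; case: (2 ^ i)%N => [|k]; rewrite ?muln0 // mul2n doubleS.
have Pnz : P != 0 by apply/eqP => P0; move: P1; rewrite P0 coef0 => /eqP; rewrite eq_sym oner_eq0.
have := max_poly_roots Pnz _ (enum_uniq K).
have -> : all (root P) (enum K) by apply/allP => w _; rewrite /root Pw; exact: H.
move=> /(_ isT); rewrite -cardE hK.
have : (size P <= (2 ^ n.-1).+1)%N.
  rewrite /P; apply: (leq_trans (size_sum _ _ _)).
  apply/bigmax_leqP => i _; rewrite size_polyXn ltnS leq_exp2l //.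
  by rewrite -ltnS prednK.
move=> sP lt; have := leq_trans lt sP; rewrite ltnS leq_exp2l //.
by case: (n) hn => //= m _; rewrite ltnn.
Qed.


Lemma chi_w : exists w, chi w = -1.
Proof.
have [w hw] := tr_nonzero; exists w; rewrite /chi /sign2 (negbTE hw).
done.
Qed.

Lemma sum_chi (c : K) :
  \sum_(v : K) chi (v * c) = if c == 0 then (#|K|%:R : int) else 0.
Proof.
case: eqP => [->|/eqP cnz].
  by under eq_bigr do rewrite mulr0 chi0; rewrite sumr_const.
have [w hw] := chi_w.
set s := \sum_(v : K) _.
have : s = - s.
  rewrite {1}/s (reindex_inj (addIr (w / c))) /=.
  under eq_bigr do rewrite mulrDl divfK // chiD hw mulrN1.
  by rewrite sumrN.
move=> h; lia.
Qed.


Variable F : K -> K.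

Definition G (b x : K) := F x + b * x.
Definition m (b a : K) : nat := #|[pred x | G b x == a]|.
Notation N := (#|K|%:R : int).

Lemma m_sum b a : ((m b a)%:R : int) = \sum_x ((G b x == a)%:R : int).
Proof.
rewrite /m -sum1_card natr_sum big_mkcond /=; apply: eq_bigr => x _.
by rewrite inE; case: (_ == _).
Qed.

Lemma fiber b (f : K -> int) : \sum_x f (G b x) = \sum_a (m b a)%:R * f a.
Proof.
under [RHS]eq_bigr do rewrite m_sum mulr_suml.
rewrite exchange_big /=; apply: eq_bigr => x _.
rewrite (bigD1 (G b x)) //= eqxx mul1r big1 ?addr0 // => a /negbTE.
by rewrite eq_sym => ->; rewrite mul0r.
Qed.

Lemma walshE u v : walsh n F u v = \sum_x chi (v * F x + u * x).
Proof. by apply: eq_bigr => x _; rewrite /chi trD. Qed.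

Definition WB b v := \sum_x chi (v * G b x).

Lemma WBE b v : walsh n F (b * v) v = WB b v.
Proof.
rewrite walshE; apply: eq_bigr => x _; congr chi.
by rewrite /G mulrDr mulrCA mulrA.
Qed.

Lemma chi_orth (v a c : K) : chi (v * a) * chi (v * c) = chi (v * (a + c)).
Proof. by rewrite mulrDr chiD. Qed.

Lemma eq_pchar2 (a c : K) : (a + c == 0) = (a == c).
Proof. by rewrite addr_eq0 oppr_pchar2. Qed.

Lemma L1 b c : \sum_v WB b v * chi (v * c) = N * (m b c)%:R.
Proof.
under eq_bigr do rewrite /WB mulr_suml.
rewrite exchange_big /=.
under eq_bigr do (under eq_bigr do rewrite chi_orth; rewrite sum_chi eq_pchar2).
rewrite m_sum mulr_sumr; apply: eq_bigr => x _.
by case: (_ == _); rewrite ?mulr1 ?mulr0.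
Qed.

Lemma E1 b : \sum_v1 \sum_v2 WB b v1 * WB b v2 * WB b (v1 + v2)
  = N ^+ 2 * \sum_a (m b a)%:R ^+ 3.
Proof.
have h v1 v2 : WB b v1 * WB b v2 * WB b (v1 + v2) =
    \sum_z (WB b v1 * chi (v1 * G b z)) * (WB b v2 * chi (v2 * G b z)).
  rewrite /WB [X in _ * X]/= mulr_sumr; apply: eq_bigr => z _.
  rewrite mulrDl chiD; ring.
under eq_bigr do under eq_bigr do rewrite h.
under eq_bigr do rewrite exchange_big /=.
rewrite exchange_big /=.
have -> : \sum_z \sum_v1 \sum_v2 (WB b v1 * chi (v1 * G b z)) * (WB b v2 * chi (v2 * G b z))
   = \sum_z (N * (m b (G b z))%:R) ^+ 2.
  by apply: eq_bigr => z _; rewrite -L1 expr2 big_distrlr /=.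

rewrite (fiber b (fun a => (N * (m b a)%:R) ^+ 2)) mulr_sumr.
by apply: eq_bigr => a _; rewrite exprMn; ring.
Qed.

Lemma E2 b : \sum_v WB b v ^+ 2 = N * \sum_a (m b a)%:R ^+ 2.
Proof.
have -> : \sum_v WB b v ^+ 2 = \sum_z N * (m b (G b z))%:R.
  under eq_bigr do rewrite expr2 {2}/WB mulr_sumr.
  by rewrite exchange_big /=; apply: eq_bigr => z _; rewrite L1.
rewrite (fiber b (fun a => N * (m b a)%:R)) mulr_sumr.
by apply: eq_bigr => a _; ring.
Qed.

Lemma E4 b : \sum_a ((m b a)%:R : int) = N.
Proof.
transitivity (\sum_a (m b a)%:R * (1:int)); first by under [RHS]eq_bigr do rewrite mulr1.
by rewrite -(fiber b (fun _ => 1)) sumr_const.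
Qed.


Lemma sum_eq1 (c : K) : \sum_b (((b == c) : nat)%:R : int) = 1.
Proof.
rewrite (bigD1 c) //= eqxx big1 ?addr0 // => b /negbTE -> //.
Qed.

Lemma slope_eq b x z : x != z ->
  (G b x == G b z) = (b == (F z - F x) / (x - z)).
Proof.
move=> xz; have dnz : x - z != 0 by rewrite subr_eq0.
rewrite -[RHS](inj_eq (mulIf dnz)) /= divfK //.
rewrite -subr_eq0 -[X in _ = X]subr_eq0 /G; congr (_ == 0); ring.
Qed.

Lemma E5 : \sum_b \sum_a ((m b a)%:R : int) ^+ 2 = 2%:R * N ^+ 2 - N.
Proof.
have h b : \sum_a ((m b a)%:R : int) ^+ 2 = \sum_z \sum_x ((G b x == G b z) : nat)%:R.
  transitivity (\sum_a (m b a)%:R * ((m b a)%:R : int)).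
    by apply: eq_bigr => a _; rewrite expr2.
  by rewrite -(fiber b (fun a => (m b a)%:R)); apply: eq_bigr => z _; rewrite m_sum.
under eq_bigr do rewrite h.
rewrite exchange_big /=.
under eq_bigr do rewrite exchange_big /=.
have -> : \sum_(z : K) \sum_(x : K) \sum_(b : K) (((G b x == G b z) : nat)%:R : int)
    = \sum_(z : K) (N + (#|K|.-1)%:R).
  apply: eq_bigr => z _.
  rewrite (bigD1 z) //=; congr (_ + _).
    by under eq_bigr do rewrite eqxx; rewrite sumr_const.
  transitivity (\sum_(x | x != z) (1 : int)).
    apply: eq_bigr => x xz.
    by under eq_bigr do rewrite slope_eq //; rewrite sum_eq1.
  rewrite sumr_const; congr (_%:R); rewrite -(cardC1 z); apply: eq_card => x; rewrite !inE //.
have k0 : (0 < #|K|)%N by apply/card_gt0P; exists 0.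
rewrite sumr_const -mulr_natr; move: k0; case: #|K| => // k _ /=.
rewrite -addn1 natrD; ring.
Qed.


Lemma card_ne0 : \sum_(b : K | b != 0) (1 : int) = N - 1.
Proof.
rewrite sumr_const.
have -> : #|[pred b : K | b != 0]| = #|K|.-1.
  by rewrite -(cardC1 (0:K)); apply: eq_card => x; rewrite !inE.
have k0 : (0 < #|K|)%N by apply/card_gt0P; exists 0.
move: k0; case: #|K| => // k _ /=.
by rewrite -addn1 natrD addrK.
Qed.

Lemma S_eq :
    \sum_(b : K | b != 0) \sum_(v1 : K) \sum_(v2 : K)
        walsh n F (b * v1) v1 * walsh n F (b * v2) v2
          * walsh n F (b * (v1 + v2)) (v1 + v2)
    + (2 ^ (n + 2))%:Z * \sum_(v : K | v != 0) walsh n F 0 v ^+ 2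
    - (2 ^ (4 * n + 2))%:Z + (2 ^ (3 * n + 2))%:Z
  = N ^+ 2 * (\sum_(b : K | b != 0) \sum_a f3 (m b a) + \sum_a f2 (m 0 a)).
Proof.
have eN k : ((2 ^ (k * n + 2))%N%:Z) = 4%:R * N ^+ k.
  by rewrite -natz hK -natrX -natrM expnD (mulnC k) expnM mulnC.
rewrite -[(n + 2)%N](congr1 (addn^~ 2%N) (mul1n n)) !eN expr1.
under eq_bigr do under eq_bigr do under eq_bigr do rewrite !WBE.
under eq_bigr do rewrite E1.
have -> : \sum_(v | v != 0) walsh n F 0 v ^+ 2 = N * \sum_a (m 0 a)%:R ^+ 2 - N ^+ 2.
  rewrite -E2 [X in _ = X - _](bigD1 0) //=.
  have -> : WB 0 0 = N by rewrite /WB; under eq_bigr do rewrite mul0r chi0; rewrite sumr_const.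
  by rewrite addrC addrK; apply: eq_bigr => v _; rewrite -WBE mul0r.
have e5 := E5; rewrite (bigD1 0) //= in e5.
have e4 : \sum_(b | b != 0) \sum_a ((m b a)%:R : int) = N * (N - 1).
  by under eq_bigr do rewrite E4; rewrite -card_ne0 mulr_sumr; under [RHS]eq_bigr do rewrite mulr1.
have e40 := E4 0.
rewrite /f3 /f2.
under [in RHS]eq_bigr do rewrite !big_split /= sumrN -!mulr_sumr.
rewrite -mulr_sumr big_split /= sumrB -!mulr_sumr sumrB e40 e4.
move: e5; set B := \sum_(i | i != 0) _; set D := \sum_a _ ^+ 2 => e5.
have -> : B = 2%:R * N ^+ 2 - N - D by rewrite -e5; ring.
ring.
Qed.



Definition mat3f (p q r : 'rV[K]_3) (i j : nat) : K :=
  if i == 0%N then p 0 (inord j) else if i == 1%N then q 0 (inord j) else r 0 (inord j).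
Definition mat3 (p q r : 'rV[K]_3) : 'M[K]_3 := \matrix_(i < 3, j < 3) mat3f p q r i j.

Lemma det_row3 a1 b1 c1 a2 b2 c2 a3 b3 c3 :
  \det (mat3 (row3 a1 b1 c1) (row3 a2 b2 c2) (row3 a3 b3 c3)) =
  a1 * (b2 * c3 - c2 * b3) - b1 * (a2 * c3 - c2 * a3) + c1 * (a2 * b3 - b2 * a3).
Proof. by rewrite /mat3 det3 /mat3f /= !mxE !inordK. Qed.

Lemma row_mat3 (p q r : 'rV[K]_3) (i : 'I_3) :
  row i (mat3 p q r) = if (i : nat) == 0%N then p else if (i : nat) == 1%N then q else r.
Proof.
apply/rowP => j; rewrite !mxE /mat3f /= inord_val.
by case: ifP => _ //; case: ifP.
Qed.

Lemma coll_det p q r : pg_collinear p q r -> \det (mat3 p q r) = 0.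
Proof.
case=> L [rk pL qL rL].
have sub : (mat3 p q r <= L)%MS.
  by apply/row_subP => i; rewrite row_mat3; case: ifP => _ //; case: ifP.
have : (\rank (mat3 p q r) <= 2)%N by apply: leq_trans (mxrankS sub) _; rewrite rk.
apply: contraTeq => hd.
have : mat3 p q r \in unitmx by rewrite unitmxE unitfE.
by rewrite -row_free_unit /row_free => /eqP ->.
Qed.


Definition pt (t : K) : 'rV[K]_3 := row3 1 t (F t).
Definition e2 : 'rV[K]_3 := row3 0 1 0.
Definition e3 : 'rV[K]_3 := row3 0 0 1.

Lemma mem_op p : p \in opoints F -> (exists t, p = pt t) \/ p = e2 \/ p = e3.
Proof.
rewrite mem_cat => /orP[/mapP[t _ ->]|]; first by left; exists t.
by rewrite !inE => /orP[] /eqP ->; right; [left|right].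
Qed.

Lemma pt_in t : pt t \in opoints F.
Proof. by rewrite mem_cat map_f ?mem_enum. Qed.
Lemma e2_in : e2 \in opoints F.
Proof. by rewrite mem_cat !inE eqxx !orbT. Qed.

Lemma row3_0 (a b c : K) : row3 a b c 0 0 = a. Proof. by rewrite mxE. Qed.
Lemma row3_1 (a b c : K) : row3 a b c 0 1 = b. Proof. by rewrite mxE. Qed.
Lemma row3_2 (a b c : K) : row3 a b c 0 2 = c. Proof. by rewrite mxE. Qed.

Lemma sub3 (a b c a' b' c' : K) : (row3 a b c <= row3 a' b' c')%MS ->
  exists k, [/\ a = k * a', b = k * b' & c = k * c'].
Proof.
case/sub_rVP => k e; exists k.
have h i : row3 a b c 0 i = k * row3 a' b' c' 0 i by rewrite e mxE.
by have := h 0; have := h 1; have := h 2; rewrite !row3_0 !row3_1 !row3_2.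
Qed.

Lemma row3_lin (a b x1 y1 z1 x2 y2 z2 : K) :
  a *: row3 x1 y1 z1 + b *: row3 x2 y2 z2 =
  row3 (a * x1 + b * x2) (a * y1 + b * y2) (a * z1 + b * z2) :> 'rV[K]_3.
Proof.
apply/rowP => i; rewrite !mxE.
by case: ifP => _ //; case: ifP.
Qed.

Lemma pt_neq t s : ~~ (pt t == pt s)%MS -> t != s.
Proof. by apply: contraNneq => ->; rewrite submx_refl. Qed.

Lemma pt_neq' t s : t != s -> ~~ (pt t == pt s)%MS.
Proof.
move=> ts; apply/negP => /andP[/sub3 [k [h1 h2 _]]].
have k1 : k = 1 by rewrite h1 mulr1.
by move: ts; rewrite h2 k1 mul1r eqxx.
Qed.

Lemma pt_e2 t : ~~ (pt t == e2)%MS.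
Proof.
apply/negP => /andP[/sub3 [k [h1 _ _]]].
by move: (oner_neq0 K); rewrite h1 mulr0 eqxx.
Qed.

Lemma pt_nz t : pt t != 0.
Proof.
apply/eqP => h; have := row3_0 1 t (F t); rewrite -/(pt t) h mxE => /eqP.
by rewrite eq_sym oner_eq0.
Qed.

Lemma coll (p q r : 'rV[K]_3) a b : p != 0 -> q != 0 -> ~~ (p == q)%MS ->
  r = a *: p + b *: q -> pg_collinear p q r.
Proof.
move=> pnz qnz npq ->.
have pS : (p <= p + q)%MS := addsmxSl p q.
have qS : (q <= p + q)%MS := addsmxSr p q.
exists (p + q)%MS; split => //; last first.
  by rewrite addmx_sub_adds // scalemx_sub.
have rp : \rank p = 1%N by rewrite rank_rV pnz.
have rq : \rank q = 1%N by rewrite rank_rV qnz.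
have le2 : (\rank (p + q)%MS <= 2)%N.
  have := mxrank_sum_cap p q; rewrite rp rq => e.
  by apply: leq_trans (leq_addr (\rank (p :&: q)%MS) _) _; rewrite e.
have ge1 : (1 <= \rank (p + q)%MS)%N by have := mxrankS pS; rewrite rp.
apply/eqP; rewrite eqn_leq le2 /=; rewrite ltn_neqAle ge1 andbT.
apply/eqP => e.
have e1 : (p == p + q)%MS by rewrite -(mxrank_leqif_eq pS).2; apply/eqP; rewrite -e; exact: rp.
have e2' : (q == p + q)%MS by rewrite -(mxrank_leqif_eq qS).2; apply/eqP; rewrite -e; exact: rq.
move: npq; case/andP: e1 => _ h1; case/andP: e2' => _ h2.
by rewrite (submx_trans pS h2) (submx_trans qS h1).
Qed.


Lemma pm_zero (x y : K) : (y = x \/ y = - x) -> y = 0 -> x = 0.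
Proof. by case=> -> => [|/eqP]; rewrite ?oppr_eq0 => // /eqP. Qed.

Lemma fibP b a x : (x \in [pred x | G b x == a]) = (G b x == a).
Proof. by rewrite inE. Qed.

Lemma Finj (H1 : forall a, (m 0%R a <= 1)%N) x y : F x = F y -> x = y.
Proof.
move=> e; apply/eqP; apply/negPn/negP => xy.
have := H1 (F x); rewrite leqNgt => /negP; apply; apply/card_gt1P.
by exists x, y; rewrite !fibP /G !mul0r !addr0 e eqxx.
Qed.

Lemma three (H1 : forall a, (m 0%R a <= 1)%N)
    (H2 : forall b a, b != 0 -> (m b a <= 2)%N) t s u :
  t != s -> t != u -> s != u ->
  (s - t) * (F u - F t) - (u - t) * (F s - F t) = 0 -> False.
Proof.
move=> ts tu su hd.
have st : s - t != 0 by rewrite subr_eq0 eq_sym.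
have ut : u - t != 0 by rewrite subr_eq0 eq_sym.
set b := (F t - F s) / (s - t).
have bnz : b != 0.
  rewrite /b mulf_eq0 invr_eq0 negb_or st andbT subr_eq0.
  by apply/eqP => /(Finj H1) /eqP; rewrite (negbTE ts).
have hs : G b s == G b t by rewrite slope_eq // eq_sym.
have hu : G b u == G b t.
  rewrite slope_eq ?(eq_sym u) // /b eqr_div //; apply/eqP.
  by apply: subr0_eq; rewrite -hd; ring.
have := H2 b (G b t) bnz; rewrite leqNgt => /negP; apply; apply/card_gt2P.
exists t, s, u; rewrite !fibP hs hu eqxx; split => //; split => //.
by rewrite eq_sym.
Qed.

Lemma opoly_of (H1 : forall a, (m 0%R a <= 1)%N)
    (H2 : forall b a, b != 0 -> (m b a <= 2)%N) : o_polynomial F.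
Proof.
move=> p q r hp hq hr npq npr nqr /coll_det; move: npq npr nqr.
case/mem_op: hp => [[t ->]|[->|->]]; case/mem_op: hq => [[s ->]|[->|->]];
  case/mem_op: hr => [[u ->]|[->|->]]; move=> npq npr nqr; rewrite /pt /e2 /e3 det_row3 => hd.
- by apply: (three H1 H2 (pt_neq npq) (pt_neq npr) (pt_neq nqr)); rewrite -hd; ring.
- have h1 : F t - F s = 0 by apply: (pm_zero _ hd); first [by left; ring | by right; ring].
  by move: (pt_neq npq); rewrite (Finj H1 (subr0_eq h1)) eqxx.
- have h1 : t - s = 0 by apply: (pm_zero _ hd); first [by left; ring | by right; ring].
  by move: (pt_neq npq); rewrite (subr0_eq h1) eqxx.
- have h1 : F t - F u = 0 by apply: (pm_zero _ hd); first [by left; ring | by right; ring].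
  by move: (pt_neq npr); rewrite (Finj H1 (subr0_eq h1)) eqxx.
- by move: nqr; rewrite submx_refl.
- have h1 : (1:K) = 0 by apply: (pm_zero _ hd); first [by left; ring | by right; ring].
  by move: (oner_neq0 K); rewrite h1 eqxx.
- have h1 : t - u = 0 by apply: (pm_zero _ hd); first [by left; ring | by right; ring].
  by move: (pt_neq npr); rewrite (subr0_eq h1) eqxx.
- have h1 : (1:K) = 0 by apply: (pm_zero _ hd); first [by left; ring | by right; ring].
  by move: (oner_neq0 K); rewrite h1 eqxx.
- by move: nqr; rewrite submx_refl.
- have h1 : F s - F u = 0 by apply: (pm_zero _ hd); first [by left; ring | by right; ring].
  by move: (pt_neq nqr); rewrite (Finj H1 (subr0_eq h1)) eqxx.
- by move: npr; rewrite submx_refl.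
- have h1 : (1:K) = 0 by apply: (pm_zero _ hd); first [by left; ring | by right; ring].
  by move: (oner_neq0 K); rewrite h1 eqxx.
- by move: npq; rewrite submx_refl.
- by move: npq; rewrite submx_refl.
- by move: npq; rewrite submx_refl.
- have h1 : (1:K) = 0 by apply: (pm_zero _ hd); first [by left; ring | by right; ring].
  by move: (oner_neq0 K); rewrite h1 eqxx.
- by move: npr; rewrite submx_refl.
- by move: nqr; rewrite submx_refl.
- have h1 : s - u = 0 by apply: (pm_zero _ hd); first [by left; ring | by right; ring].
  by move: (pt_neq nqr); rewrite (subr0_eq h1) eqxx.
- have h1 : (1:K) = 0 by apply: (pm_zero _ hd); first [by left; ring | by right; ring].
  by move: (oner_neq0 K); rewrite h1 eqxx.
- by move: npr; rewrite submx_refl.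
- have h1 : (1:K) = 0 by apply: (pm_zero _ hd); first [by left; ring | by right; ring].
  by move: (oner_neq0 K); rewrite h1 eqxx.
- by move: nqr; rewrite submx_refl.
- by move: npr; rewrite submx_refl.
- by move: npq; rewrite submx_refl.
- by move: npq; rewrite submx_refl.
- by move: npq; rewrite submx_refl.
Qed.


Lemma cond_of (Ho : o_polynomial F) :
  (forall a, (m 0%R a <= 1)%N) /\ (forall b a, b != 0 -> (m b a <= 2)%N).
Proof.
split.
  move=> a; rewrite leqNgt; apply/negP => /card_gt1P [x [y [hx hy xy]]].
  move: hx hy; rewrite !fibP /G !mul0r !addr0 => /eqP hx /eqP hy.
  have yx : y - x != 0 by rewrite subr_eq0 eq_sym.
  apply: (Ho (pt x) (pt y) e2 (pt_in x) (pt_in y) e2_in (pt_neq' xy) (pt_e2 x) (pt_e2 y)).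
  apply: (coll (a := - (y - x)^-1) (b := (y - x)^-1) (pt_nz x) (pt_nz y) (pt_neq' xy)).
  rewrite /pt /e2 row3_lin hx hy; congr row3; field; exact: yx.
move=> b a bnz; rewrite leqNgt; apply/negP.
move=> /card_gt2P [x [y [z [[hx hy hz] [xy yz zx]]]]].
move: hx hy hz; rewrite !fibP /G => /eqP hx /eqP hy /eqP hz.
have yx : y - x != 0 by rewrite subr_eq0 eq_sym.
have xz : x != z by rewrite eq_sym.
apply: (Ho (pt x) (pt y) (pt z) (pt_in x) (pt_in y) (pt_in z) (pt_neq' xy) (pt_neq' xz) (pt_neq' yz)).
apply: (coll (a := 1 - (z - x) / (y - x)) (b := (z - x) / (y - x)) (pt_nz x) (pt_nz y) (pt_neq' xy)).
have Fx : F x = a - b * x by rewrite -hx; ring.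
have Fy : F y = a - b * y by rewrite -hy; ring.
have Fz : F z = a - b * z by rewrite -hz; ring.
rewrite /pt row3_lin Fx Fy Fz; congr row3; field; exact: yx.
Qed.


Lemma main_thm :
  let S : int :=
    \sum_(b : K | b != 0) \sum_(v1 : K) \sum_(v2 : K)
        walsh n F (b * v1) v1 * walsh n F (b * v2) v2
          * walsh n F (b * (v1 + v2)) (v1 + v2)
    + (2 ^ (n + 2))%:Z * \sum_(v : K | v != 0) walsh n F 0 v ^+ 2
    - (2 ^ (4 * n + 2))%:Z + (2 ^ (3 * n + 2))%:Z in
  0 <= S /\ (S = 0 <-> o_polynomial F).
Proof.
move=> S; rewrite /S S_eq.
have in3 : forall b, b != 0 -> 0 <= \sum_a f3 (m b a).
  by move=> b _; apply: sumr_ge0 => a _; apply: f3_ge0.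
have g1 : 0 <= \sum_(b : K | b != 0) \sum_a f3 (m b a) by apply: sumr_ge0.
have g2 : 0 <= \sum_a f2 (m 0 a) by apply: sumr_ge0 => a _; apply: f2_ge0.
have Nnz : (N ^+ 2 : int) != 0.
  by rewrite expf_neq0 // pnatr_eq0 -lt0n; apply/card_gt0P; exists 0.
split; first by rewrite mulr_ge0 ?exprn_ge0 ?addr_ge0.
split.
  move/eqP; rewrite mulf_eq0 (negbTE Nnz) /= paddr_eq0 // => /andP[/eqP h3 /eqP h2].
  apply: opoly_of.
    move=> a; rewrite -f2_eq0; apply/eqP.
    exact: (psumr_eq0P (fun a _ => f2_ge0 _) h2).
  move=> b a bnz; rewrite -f3_eq0; apply/eqP.
  have hb := psumr_eq0P in3 h3 bnz.
  exact: (psumr_eq0P (fun a _ => f3_ge0 _) hb).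
move/cond_of => [H1 H2].
rewrite big1 ?add0r; last by move=> b bnz; apply: big1 => a _; apply/eqP; rewrite f3_eq0 H2.
by rewrite big1 ?mulr0 // => a _; apply/eqP; rewrite f2_eq0 H1.
Qed.

End Tr.

Unset Implicit Arguments.
Set Strict Implicit.

Theorem theorem2 (K : finFieldType) (n : nat) (F : K -> K)
    (hn : (1 <= n)%N) (hK : #|K| = (2 ^ n)%N) (hchar : 2%N \in [pchar K]) :
  let S : int :=
    \sum_(b : K | b != 0) \sum_(v1 : K) \sum_(v2 : K)
        walsh n F (b * v1) v1 * walsh n F (b * v2) v2
          * walsh n F (b * (v1 + v2)) (v1 + v2)
    + (2 ^ (n + 2))%:Z * \sum_(v : K | v != 0) walsh n F 0 v ^+ 2
    - (2 ^ (4 * n + 2))%:Z + (2 ^ (3 * n + 2))%:Z in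
  0 <= S /\ (S = 0 <-> o_polynomial F).
Proof. exact: (main_thm hn hK hchar F). Qed.
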